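(* Let $\kappa,\lambda$ be cardinals. If a locally convex space $E$ is $(\kappa,\lambda)_p$-equiconvergent, then the bornology of $E$ is $(\kappa,\lambda)$-tall.
   Context: A topological space $X$ is $(\kappa,\lambda)_p$-equiconvergent at a point $x$ if for every indexed family $\{x_\alpha\}_{\alpha\in\kappa}$ of sequences $x_\alpha\in X^\omega$ converging to $x$ there exists $\Lambda\subseteq\kappa$ with $|\Lambda|=\lambda$ such that for every neighborhood $O_x$ of $x$ there is $n\in\omega$ for which the set $\{\alpha\in\Lambda: x_\alpha(n)\notin O_x\}$ is finite; $X$ is $(\kappa,\lambda)_p$-equiconvergent if it is so at every point. A subset $B$ of a topological vector space is bounded if for every neighborhood $U$ of zero there is $n\in\mathbb N$ with $B\subseteq nU$. The bornology of $E$ is $(\kappa,\lambda)$-tall if every subset $A\subseteq E$ of cardinality $\kappa$ contains a bounded subset $B\subseteq A$ of cardinality $\lambda$. *)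

(* Defs.v *)
From HB Require Import structures.
From mathcomp Require Import all_boot all_order all_algebra.
From mathcomp Require Import all_classical all_reals all_analysis.
Set Implicit Arguments. Unset Strict Implicit. Unset Printing Implicit Defensive.
Import Order.TTheory GRing.Theory Num.Theory.
Local Open Scope classical_set_scope.
Local Open Scope ring_scope.

(* Cardinals are represented by index types: the cardinal kappa is the
   cardinality of a type K, and "|A| = kappa" is  A #= [set: K]. *)

Definition equiconvergent_at (K L : Type) (X : topologicalType) (x : X) : Prop :=
  forall s : K -> (nat -> X),
    (forall a, s a @ \oo --> x) ->
    exists Lam : set K,
      (Lam #= [set: L])%card /\
      forall O : set X, nbhs x O ->
        exists n : nat, finite_set [set a | Lam a /\ ~ O (s a n)].

Definition equiconvergent (K L : Type) (X : topologicalType) : Prop :=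
  forall x : X, equiconvergent_at K L x.

Definition tvs_bounded (R : realType) (E : tvsType R) (B : set E) : Prop :=
  forall U : set E, nbhs (0 : E) U ->
    exists n : nat, (0 < n)%N /\ B `<=` [set (n%:R : R) *: u | u in U].

Definition bornology_tall (K L : Type) (R : realType) (E : tvsType R) : Prop :=
  forall A : set E, (A #= [set: K])%card ->
    exists B : set E, B `<=` A /\ (B #= [set: L])%card /\ tvs_bounded B.

(* Main.v *)
Require Import Defs.
From HB Require Import structures.
From mathcomp Require Import all_boot all_order all_algebra.
From mathcomp Require Import all_classical all_reals all_analysis.
Set Implicit Arguments. Unset Strict Implicit. Unset Printing Implicit Defensive.
Import Order.TTheory GRing.Theory Num.Theory.
Local Open Scope classical_set_scope.
Local Open Scope ring_scope.

Lemma harm_cvg0 (R : realType) : (fun N : nat => (N.+1%:R : R)^-1) @ \oo --> (0 : R^o).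
Proof. exact: (@cvg_harmonic R). Qed.

Lemma scale_harm (R : realType) (E : tvsType R) (x : E) :
  (fun N : nat => (N.+1%:R : R)^-1 *: x) @ \oo --> (0 : E).
Proof.
have := @continuous2_cvg nat R^o E E \oo _ (fun N : nat => (N.+1%:R : R)^-1) (fun=> x)
  (fun (t : R^o) (v : E) => t *: v) 0 x (scale_continuous ((0 : R^o), x)) (@harm_cvg0 R) (cvg_cst x).
rewrite scale0r; apply; exact: eventually_filter.
Qed.

Lemma mul_harm (R : realType) (c : R) :
  (fun N : nat => c * (N.+1%:R : R)^-1) @ \oo --> (0 : R^o).
Proof.
have := @cvgMl_tmp R^o nat \oo _ _ c 0 (@harm_cvg0 R).
rewrite mulr0; apply; exact: eventually_filter.
Qed.

Theorem proposition3p3 (K L : Type) (R : realType) (E : tvsType R) :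
  equiconvergent K L E -> bornology_tall K L E.
Proof.
move=> Heq A /card_bijP[f [g fg gf]].
pose h (k : K) : E := val (g (@SigSub _ _ _ k (mem_set (I : [set: K] k)))).
have hA k : A (h k) by rewrite /h; exact: set_mem (valP _).
have hinj : injective h.
  by move=> k1 k2 /val_inj /(congr1 f); rewrite !gf => -[].
pose s (k : K) (n : nat) : E := (n.+1%:R : R)^-1 *: h k.
have [Lam [HL Hfin]] := Heq 0 s (fun k => scale_harm (h k)).
exists (h @` Lam); split; first by move=> _ [k _ <-].
split.
  rewrite (card_eql (inj_card_eq _)) //; by move=> ? ? _ _; exact: hinj.
move=> U U0.
have := scale_continuous ((0:R^o), (0:E)) U.
rewrite /= scale0r => /(_ U0) [[P Q]] /= [P0 Q0] PQ.
have [n Fin] := Hfin Q Q0.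
have c1 : \oo [set N : nat | P ((n.+1%:R : R) * (N.+1%:R)^-1)] := mul_harm (n.+1%:R : R) P0.
have /finite_fsetP[X GX] := finite_image h Fin.
have c2 := @filter_bigI nat E X (fun x => [set N : nat | U ((N.+1%:R : R)^-1 *: x)]) _ eventually_filter (fun x _ => scale_harm x U0).
have [N [c1N c2N]] := filter_ex (filterI c1 c2).
exists N.+1; split => //.
move=> _ [a La <-].
exists ((N.+1%:R : R)^-1 *: h a); last by rewrite scalerA mulfV ?scale1r // pnatr_eq0.
case: (pselect (Q (s a n))) => Qa.
  have := PQ (((n.+1%:R : R) / N.+1%:R : R^o), s a n) (conj c1N Qa).
  by rewrite /= /s scalerA mulrAC mulfV ?mul1r // pnatr_eq0.
apply: c2N; rewrite -GX; by exists a.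
Qed.
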